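(* Let $\Gamma=\mathbb F_r$ and $\varepsilon\in(0,1/2]$. For every $\delta>0$ there is a weak* open neighborhood $\mathcal O$ of $\mathrm{Is}_\varepsilon$ such that for every finite set $V$ and every $\sigma\in\mathrm{Hom}(\Gamma,\mathrm{Sym}(V))$: if $\Omega(\sigma,\mathcal O)\ne\varnothing$ then $\mathsf{mcut}(\sigma)<|V|r(\varepsilon+\delta)$.
   Context: $\Gamma=\mathbb F_r$ is the free group on $s_1,\dots,s_r$, acting on $\{\pm1\}^\Gamma$ by $(\beta\mathbf x)(\gamma)=\mathbf x(\gamma\beta)$. For a finite set $V$ and $\sigma\in\mathrm{Hom}(\mathbb F_r,\mathrm{Sym}(V))$ (write $\sigma^\gamma=\sigma(\gamma)$), the graph of $\sigma$ is the multigraph with one edge $\{v,\sigma^{s_i}v\}$ for each $v\in V$, $i\in[r]$ (so $|V|r$ edges). For $\mathbf x\in\{\pm1\}^V$, $\Pi^\sigma_v\mathbf x=(\mathbf x(\sigma^\gamma v))_{\gamma\in\Gamma}$, $P^\sigma_{\mathbf x}=\frac1{|V|}\sum_v\delta_{\Pi^\sigma_v\mathbf x}$, and $\Omega(\sigma,\mathcal O)=\{\mathbf x:P^\sigma_{\mathbf x}\in\mathcal O\}$. For $\varepsilon\in(0,1/2]$, $\mathrm{Is}_\varepsilon$ is the free-boundary Ising measure: the law of the $\{-1,+1\}$-valued, $\Gamma$-indexed stationary Markov chain on the Cayley tree with uniform single-site marginal and transition matrix $\begin{pmatrix}1-\varepsilon&\varepsilon\\ \varepsilon&1-\varepsilon\end{pmatrix}$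 across each edge. A bisection of $V$ is a partition $V=V_1\sqcup V_2$ with $||V_1|-|V_2||\le1$; its cut size is the number of edges of the graph of $\sigma$ with endpoints in different parts; $\mathsf{mcut}(\sigma)$ is the minimum cut size over all bisections. *)

(* Defs.v *)
From mathcomp Require Import all_boot all_order all_algebra all_fingroup.
From mathcomp Require Import reals.
Set Implicit Arguments. Unset Strict Implicit. Unset Printing Implicit Defensive.
Import Order.TTheory GRing.Theory Num.Theory.
Local Open Scope ring_scope.

(* A letter (i, false) stands for s_i, (i, true) for s_i^{-1}. *)
Definition letter (r : nat) := ('I_r * bool)%type.
Definition word (r : nat) := seq (letter r).

Definition cancels r (l l' : letter r) : bool := (l.1 == l'.1) && (l.2 != l'.2).

Fixpoint rwords (r k : nat) : seq (word r) :=
  match k with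
  | 0 => [:: [::]]
  | k.+1 => flatten [seq [seq (l :: w) | l <- enum {: 'I_r * bool} &
                          (if w is l' :: _ then ~~ cancels l l' else true)]
                    | w <- rwords r k]
  end.

Definition ball (r n : nat) : seq (word r) :=
  flatten [seq rwords r k | k <- iota 0 n.+1].

(* A homomorphism F_r -> Sym(V) is given by the images of the free generators;
   sigma^gamma for gamma = l_1 ... l_k acts as sigma^{l_1} o ... o sigma^{l_k}. *)
Definition lact r (V : finType) (sigma : 'I_r -> {perm V}) (l : letter r) (v : V) : V :=
  if l.2 then ((sigma l.1)^-1)%g v else sigma l.1 v.

Definition word_act r (V : finType) (sigma : 'I_r -> {perm V}) (w : word r) (v : V) : V :=
  foldr (lact sigma) v w.

(* Spins: true = +1, false = -1.  A pattern xi : word r -> bool is only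
   looked at on the ball B_n. *)

(* Free-boundary Ising measure Is_eps of the cylinder {y : y|_{B_n} = xi|_{B_n}}:
   the Cayley-tree edges (compatible with the shift (beta y)(g) = y(g beta)) are
   {g, s g}; inside B_n every non-trivial reduced word w = l :: w' has the unique
   parent w' = behead w. *)
Definition Is_cyl (R : realType) (r : nat) (eps : R) (n : nat) (xi : word r -> bool) : R :=
  2^-1 * \prod_(w <- ball r n | w != [::])
            (if xi w == xi (behead w) then 1 - eps else eps).

Definition emp_cyl (R : realType) r (V : finType) (sigma : 'I_r -> {perm V})
    (x : {ffun V -> bool}) (n : nat) (xi : word r -> bool) : R :=
  (#|[set v : V | all (fun w => x (word_act sigma w v) == xi w) (ball r n)]|%:R)
    / (#|V|%:R).

(* The basic weak* neighbourhood O_{n,eta} of Is_eps: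
   { nu : |nu(C) - Is_eps(C)| < eta for every cylinder C over B_n },
   and Omega(sigma, O_{n,eta}) is the set of x with P^sigma_x in it. *)
Definition in_Omega (R : realType) r (eps : R) (n : nat) (eta : R)
    (V : finType) (sigma : 'I_r -> {perm V}) (x : {ffun V -> bool}) : Prop :=
  forall xi : word r -> bool, `|emp_cyl R sigma x n xi - Is_cyl eps n xi| < eta.

Definition cut r (V : finType) (sigma : 'I_r -> {perm V}) (A : {set V}) : nat :=
  #|[set p : V * 'I_r | (p.1 \in A) != (sigma p.2 p.1 \in A)]|.

Definition is_bisection (V : finType) (A : {set V}) : bool :=
  (#|A| <= (#|~: A|).+1)%N && (#|~: A| <= (#|A|).+1)%N.

Definition mcut r (V : finType) (sigma : 'I_r -> {perm V}) : nat :=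
  \big[minn/(#|V| * r)%N]_(A : {set V} | is_bisection A) cut sigma A.

(* Main.v *)
Require Import Defs.
From mathcomp Require Import all_boot all_order all_algebra all_fingroup.
From mathcomp Require Import reals.
From mathcomp Require Import zify ring lra.
Set Implicit Arguments. Unset Strict Implicit. Unset Printing Implicit Defensive.
Import Order.TTheory GRing.Theory Num.Theory.

Lemma bigmin_le_nat (I : eqType) (s : seq I) (P : pred I) (F : I -> nat) x j :
  j \in s -> P j -> (\big[minn/x]_(i <- s | P i) F i <= F j)%N.
Proof.
elim: s => //= a s IH; rewrite in_cons big_cons; case/orP => [/eqP->|js] Pj.
  by rewrite Pj geq_minl.
case: ifP => _; last exact: IH.
by rewrite geq_min IH ?orbT.
Qed.

Lemma mcut_le r (V : finType) (sigma : 'I_r -> {perm V}) B :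
  is_bisection B -> (mcut sigma <= cut sigma B)%N.
Proof. by move=> HB; apply: bigmin_le_nat => //; rewrite mem_index_enum. Qed.

Lemma cutC r (V : finType) (sigma : 'I_r -> {perm V}) A :
  cut sigma (~: A) = cut sigma A.
Proof.
by apply: eq_card => p; rewrite !inE; case: (p.1 \in A); case: (sigma p.2 p.1 \in A).
Qed.

Lemma cut_sum r (V : finType) (sigma : 'I_r -> {perm V}) (x : {ffun V -> bool}) :
  cut sigma [set v | x v] = (\sum_(i < r) #|[set v | x v != x (sigma i v)]|)%N.
Proof.
rewrite /cut -sum1_card.
rewrite (eq_bigl (fun p : V * 'I_r => x p.1 != x (sigma p.2 p.1))); last by move=> p; rewrite !inE.
rewrite -(pair_big_dep predT (fun v i => x v != x (sigma i v)) (fun _ _ => 1%N)) /=.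
rewrite (exchange_big_dep predT) //=; apply: eq_bigr => i _.
by rewrite -sum1_card; apply: eq_bigl => v; rewrite inE.
Qed.

Lemma cut_bisect r (V : finType) (sigma : 'I_r -> {perm V}) A :
  (#|~: A| <= #|A|)%N -> exists B, is_bisection B /\
    (cut sigma B <= cut sigma A + 2 * r * (#|A| - #|V| %/ 2))%N.
Proof.
move=> HA.
have HV := cardsC A.
set k := (#|V| %/ 2)%N.
have kA : (k <= #|A|)%N by rewrite /k; lia.
set B := [set v in take k (enum A)].
have cB : #|B| = k.
  rewrite cardsE (card_uniqP _) ?take_uniq ?enum_uniq //.
  by rewrite size_takel // -cardE.
have BA : B \subset A.
  by apply/subsetP => v; rewrite inE => /mem_take; rewrite mem_enum.
have HB := cardsC B.
exists B; split.
  by rewrite /is_bisection cB; apply/andP; split; rewrite /k; lia.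
set D := A :\: B.
have cD : #|D| = (#|A| - k)%N.
  by rewrite cardsD (setIidPr BA) cB.
have memB : forall u, (u \in B) = (u \in A) && (u \notin D).
  move=> u; rewrite in_setD; have uA := subsetP BA u.
  by case: (u \in B) uA; case: (u \in A) => //= ->.
clearbody D B.
set S1 := [set p : V * 'I_r | p.1 \in D].
set S2 := [set p : V * 'I_r | sigma p.2 p.1 \in D].
have cS1 : #|S1| = (#|D| * r)%N.
  rewrite (_ : (#|D| * r)%N = #|setX D [set: 'I_r]|); last by rewrite cardsX cardsT card_ord.
  apply: eq_card => p.
  by rewrite !inE andbT.
have cS2 : #|S2| = #|S1|.
  pose psi (p : V * 'I_r) := (sigma p.2 p.1, p.2).
  have psi_inj : injective psi.
    move=> [u i] [w j] [E1 E2] /=; rewrite /= in E1 E2; subst j.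
    by rewrite (perm_inj E1).
  rewrite -(card_preimset S1 psi_inj); apply: eq_card => p.
  by rewrite !inE.
have sub : [set p : V * 'I_r | (p.1 \in B) != (sigma p.2 p.1 \in B)] \subset
           [set p : V * 'I_r | (p.1 \in A) != (sigma p.2 p.1 \in A)] :|: (S1 :|: S2).
  apply/subsetP => p; rewrite !inE !memB.
  case: (p.1 \in D); case: (sigma p.2 p.1 \in D); rewrite ?orbT //= !andbT.
  by rewrite orbF.
apply: (leq_trans (subset_leq_card sub)).
apply: (leq_trans (leq_card_setU _ _)); rewrite -/(cut sigma A) leq_add2l.
apply: (leq_trans (leq_card_setU _ _)); rewrite cS2 cS1 cD; lia.
Qed.

Local Open Scope ring_scope.

Definition CC r := (bool * {ffun 'I_r * bool -> bool})%type.
Definition xic r (c : CC r) : word r -> bool :=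
  fun w => match w with [::] => c.1 | [:: l] => c.2 l | _ => false end.

Lemma ball1 r : ball r 1 = [::] :: [seq [:: l] | l <- enum {: 'I_r * bool}].
Proof. by rewrite /ball /= cats0 filter_predT !cats0. Qed.

Lemma Is1 (R : realType) r (eps : R) (c : CC r) :
  Is_cyl eps 1 (xic c) = 2^-1 * \prod_(l : 'I_r * bool) (if c.2 l == c.1 then 1 - eps else eps).
Proof.
rewrite /Is_cyl ball1 big_cons /= big_map; congr (_ * _).
rewrite big_enum_cond /=. by apply: eq_bigl => l.
Qed.

Definition gpat r (V : finType) (sigma : 'I_r -> {perm V}) (x : {ffun V -> bool}) (v : V) : CC r :=
  (x v, [ffun l => x (lact sigma l v)]).

Lemma emp1 (R : realType) r (V : finType) (sigma : 'I_r -> {perm V}) x (c : CC r) :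
  emp_cyl R sigma x 1 (xic c) = #|[set v | gpat sigma x v == c]|%:R / #|V|%:R.
Proof.
rewrite /emp_cyl; congr (_%:R / _); apply: eq_card => v; rewrite !inE ball1 /=.
rewrite all_map /gpat; case: c => b f /=.
rewrite xpair_eqE; congr (_ && _).
apply/allP/eqP => [H|<- l _ /=]; last by rewrite ffunE.
apply/ffunP => l; rewrite ffunE; apply/eqP; exact: (H l (mem_enum _ _)).
Qed.

Lemma countL (R : realType) r (eps eta : R) (V : finType) (sigma : 'I_r -> {perm V}) x
  (Q : pred (CC r)) :
  (0 < #|V|)%N -> in_Omega eps 1 eta sigma x ->
  `| #|[set v | Q (gpat sigma x v)]|%:R - #|V|%:R * \sum_(c | Q c) Is_cyl eps 1 (xic c) |
    <= #|V|%:R * #|{: CC r}|%:R * eta.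
Proof.
move=> V0 Hx.
have N0 : (0 : R) < #|V|%:R by rewrite ltr0n.
have -> : #|[set v | Q (gpat sigma x v)]| = (\sum_(c | Q c) #|[set v | gpat sigma x v == c]|)%N.
  rewrite -sum1_card (partition_big (gpat sigma x) Q); last by move=> v; rewrite inE.
  apply: eq_bigr => c Qc; rewrite -sum1_card; apply: eq_bigl => v; rewrite !inE.
  by apply/andP/idP => [[]//|/eqP E]; rewrite E Qc.
rewrite natr_sum mulr_sumr -sumrB.
apply: (le_trans (ler_norm_sum _ _ _)).
have H1 : forall c, `|#|[set v | gpat sigma x v == c]|%:R - #|V|%:R * Is_cyl eps 1 (xic c)| <= #|V|%:R * eta :> R.
  move=> c; have := Hx (xic c); rewrite emp1 => H.
  have -> : (#|[set v | gpat sigma x v == c]|%:R : R) = #|V|%:R * (#|[set v | gpat sigma x v == c]|%:R / #|V|%:R).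
    by rewrite mulrC -mulrA mulVf ?mulr1 // gt_eqF.
  rewrite -mulrBr normrM ger0_norm ?(ltW N0) // ler_pM2l //; exact: ltW.
apply: (le_trans (ler_sum _ (fun c _ => H1 c))).
have eta0 : 0 <= eta.
  exact: le_trans (normr_ge0 _) (ltW (Hx (xic (true, [ffun=> true])))).
rewrite big_mkcond /=.
apply: (le_trans (y := \sum_(c : CC r) #|V|%:R * eta)).
  apply: ler_sum => c _; case: ifP => _ //; exact: mulr_ge0 (ltW N0) eta0.
by rewrite sumr_const mulrAC mulr_natr.
Qed.

Lemma sum_pairC (R : realType) r (F : CC r -> R) :
  \sum_(c : CC r) F c = \sum_(f : {ffun 'I_r * bool -> bool}) F (true, f) + \sum_(f : {ffun 'I_r * bool -> bool}) F (false, f).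
Proof.
transitivity (\sum_(b : bool) \sum_(f : {ffun 'I_r * bool -> bool}) F (b, f)); last by rewrite big_bool.
by rewrite pair_bigA; apply: eq_bigr => -[b f].
Qed.

Lemma S2 (R : realType) r (eps : R) (b : bool) :
  \sum_(c : CC r | c.1 == b) Is_cyl eps 1 (xic c) = 2^-1.
Proof.
rewrite big_mkcond sum_pairC /=.
have E : forall b', \sum_(f : {ffun 'I_r * bool -> bool}) (if b' == b then Is_cyl eps 1 (xic (b', f)) else 0)
   = if b' == b then 2^-1 else 0.
  move=> b'; case: eqP => [->|_]; last by rewrite big1.
  under eq_bigr => f _ do rewrite Is1 /=.
  rewrite -mulr_sumr -(bigA_distr_bigA (fun l y => if y == b then 1 - eps else eps)) /=.
  rewrite big1 ?mulr1 // => l _; rewrite big_bool /=; case: b => /=; ring.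
rewrite !E; clear E; case: b => /=; rewrite ?addr0 ?add0r //.
Qed.

Lemma S1 (R : realType) r (eps : R) (l0 : 'I_r * bool) :
  \sum_(c : CC r | c.1 != c.2 l0) Is_cyl eps 1 (xic c) = eps.
Proof.
rewrite big_mkcond sum_pairC /=.
have E : forall b, \sum_(f : {ffun 'I_r * bool -> bool}) (if b != f l0 then Is_cyl eps 1 (xic (b, f)) else 0)
   = 2^-1 * eps.
  move=> b.
  under eq_bigr => f _ do rewrite Is1 /=.
  have E2 : forall f : {ffun 'I_r * bool -> bool},
    (if b != f l0 then 2^-1 * \prod_l (if f l == b then 1 - eps else eps) else 0)
    = 2^-1 * \prod_l (if (l == l0) && (f l == b) then 0 else if f l == b then 1 - eps else eps).
    move=> f; case: (eqVneq b (f l0)) => [fb|fb].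
      by rewrite /= (bigD1 l0) //= -fb !eqxx /= mul0r mulr0.
    rewrite /=; congr (_ * _); apply: eq_bigr => l _; case: (eqVneq l l0) => [->|] //=.
    by rewrite eq_sym (negbTE fb).
  under eq_bigr => f _ do rewrite E2.
  rewrite -mulr_sumr -(bigA_distr_bigA (fun l y => if (l == l0) && (y == b) then 0 else if y == b then 1 - eps else eps)) /=.
  congr (_ * _).
  have Hr : \prod_(i | i != l0) \sum_(j : bool)
       (if (i == l0) && (j == b) then 0 else if j == b then 1 - eps else eps) = 1 :> R.
    apply: big1 => l /negPf ->; rewrite big_bool /=; clear E2; case: b => /=; ring.
  rewrite (bigD1 l0) //= Hr mulr1 big_bool eqxx /=; clear E2 Hr; case: b => /=; ring.
rewrite !E; lra.
Qed.

Unset Implicit Arguments.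

Theorem mainTheorem15 (R : realType) (r : nat) (eps : R) :
  (0 < r)%N -> 0 < eps -> eps <= 2^-1 ->
  forall delta : R, 0 < delta ->
  exists (n : nat) (eta : R), 0 < eta /\
    forall (V : finType) (sigma : 'I_r -> {perm V}),
      (0 < #|V|)%N ->
      (exists x : {ffun V -> bool}, in_Omega eps n eta sigma x) ->
      ((mcut sigma)%:R : R) < (#|V| * r)%:R * (eps + delta).
Proof.
move=> r0 e0 eh delta d0.
have K0 : (0:R) < #|{: CC r}|%:R.
  by rewrite ltr0n; apply/card_gt0P; exists (true, [ffun=> true]).
set K : R := #|{: CC r}|%:R in K0.
exists 1%N, (delta / (6 * K)); split.
  by apply: divr_gt0 => //; apply: mulr_gt0.
move=> V sigma V0 [x Hx].
set eta := delta / (6 * K) in Hx.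
have eta0 : 0 < eta by apply: divr_gt0 => //; apply: mulr_gt0.
have deltaE : delta = 6 * K * eta.
  rewrite /eta mulrC -mulrA mulVf ?mulr1 //; apply: lt0r_neq0; exact: mulr_gt0.
set N : R := #|V|%:R.
have N0 : 0 < N by rewrite ltr0n.
have Hi : forall i : 'I_r, (#|[set v | x v != x (sigma i v)]|%:R : R) <= N * eps + N * K * eta.
  move=> i; have := countL (fun c : CC r => c.1 != c.2 (i, false)) V0 Hx; rewrite S1.
  have -> : [set v | (fun c : CC r => c.1 != c.2 (i, false)) (gpat sigma x v)] = [set v | x v != x (sigma i v)].
    by apply/setP => v; rewrite !inE /gpat /= ffunE.
  by rewrite ler_distl => /andP[_].
have Hb : forall b, (#|[set v | x v == b]|%:R : R) <= N * 2^-1 + N * K * eta.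
  move=> b; have := countL (fun c : CC r => c.1 == b) V0 Hx; rewrite S2.
  have -> : [set v | (fun c : CC r => c.1 == b) (gpat sigma x v)] = [set v | x v == b].
    by apply/setP => v; rewrite !inE /gpat /=.
  by rewrite ler_distl => /andP[_].
set A := [set v | x v].
have hcut : ((cut sigma A)%:R : R) <= r%:R * (N * eps + N * K * eta).
  rewrite cut_sum natr_sum (le_trans (ler_sum _ (fun i _ => Hi i))) //.
  by rewrite sumr_const card_ord mulr_natl.
have [A' [cA' [hA' bA']]] : exists A', cut sigma A' = cut sigma A /\ (#|~: A'| <= #|A'|)%N /\
     (#|A'|%:R : R) <= N * 2^-1 + N * K * eta.
  case: (leqP #|~: A| #|A|) => h.
    exists A; split => //; split => //.
    have -> : A = [set v | x v == true] by apply/setP => v; rewrite !inE eqb_id.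
    exact: Hb.
  exists (~: A); rewrite cutC setCK; split => //; split; first exact: ltnW.
  have -> : ~: A = [set v | x v == false] by apply/setP => v; rewrite !inE eqbF_neg.
  exact: Hb.
have [B [bisB cB]] := cut_bisect sigma hA'.
have HV := cardsC A'.
have hm : (mcut sigma <= cut sigma A + 2 * r * (#|A'| - #|~: A'|))%N.
  apply: (leq_trans (mcut_le sigma bisB)); rewrite -cA'.
  apply: (leq_trans cB); rewrite leq_add2l leq_mul2l; apply/orP; right; lia.
have hm' : ((mcut sigma)%:R : R) <= r%:R * (N * eps + N * K * eta) + 2 * r%:R * (2 * (N * K * eta)).
  apply: (le_trans (y := ((cut sigma A + 2 * r * (#|A'| - #|~: A'|))%N%:R))); first by rewrite ler_nat.
  rewrite natrD; apply: lerD => //.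
  rewrite natrM natrM natrB // ler_pM2l; last by rewrite mulr_gt0 // ltr0n.
  have : (#|A'|%:R : R) + #|~: A'|%:R = N by rewrite -natrD HV.
  lra.
have r0' : (0 : R) < r%:R by rewrite ltr0n.
rewrite natrM deltaE -/N.
have t0 : 0 < r%:R * (N * K * eta) by do 3 (apply: mulr_gt0 => //).
move: hm' t0; set t := N * K * eta; set rr : R := r%:R.
have -> : N * rr * (eps + 6 * K * eta) = rr * (N * eps) + 6 * (rr * t) by rewrite /t; ring.
have -> : rr * (N * eps + t) + 2 * rr * (2 * t) = rr * (N * eps) + 5 * (rr * t) by ring.
move: (rr * t) (rr * (N * eps)) => u w; lra.
Qed.
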